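(* Let $M$ be a non-quasianalytic weight sequence and $M'$ a positive sequence. If $M'\prec_{SV}M$, then $M'^{[n]}\prec_{SV}M^{[4n]}$ for all positive integers $n$.
   Context: A weight sequence is $M=(M_k)_{k\ge0}$ with $M_k=\mu_0\cdots\mu_k$, $1=\mu_0\le\mu_1\le\cdots$, $\mu_k\to\infty$; non-quasianalytic if $\sum1/\mu_k<\infty$. For a positive sequence $N$ and $n\in\mathbb{N}_{\ge1}$, $N^{[n]}_j:=N_{nj}^{1/n}$ (for a non-quasianalytic weight sequence $M$, $M^{[n]}$ is again one, with quotients $\mu^{[n]}_j=(\mu_{n(j-1)+1}\cdots\mu_{nj})^{1/n}$). For a positive sequence $M'$ and a non-quasianalytic weight sequence $M$, $M'\prec_{SV}M$ means: $\exists s\in\mathbb{N}_{\ge1}$ with $\sup_{j\ge1}\frac1j\sup_{0\le i<j}(M'_j/(s^jM_i))^{1/(j-i)}\sum_{k\ge j}1/\mu_k<\infty$. *)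

(* Defs.v *)
From mathcomp Require Import all_boot all_order all_algebra.
From mathcomp Require Import all_classical all_reals all_analysis.
Set Implicit Arguments. Unset Strict Implicit. Unset Printing Implicit Defensive.
Import Order.TTheory GRing.Theory Num.Theory.
Local Open Scope classical_set_scope.
Local Open Scope ring_scope.

Definition quot (R : realType) (M : nat -> R) (k : nat) : R :=
  if k is k'.+1 then M k'.+1 / M k' else 1.

Definition weight_sequence (R : realType) (M : nat -> R) : Prop :=
  M 0%N = 1 /\ (forall k, 0 < M k) /\
  (forall k, quot M k <= quot M k.+1) /\
  (quot M @ \oo --> +oo).

Definition non_quasianalytic (R : realType) (M : nat -> R) : Prop :=
  weight_sequence M /\
  (\sum_(0 <= k <oo) ((quot M k)^-1)%:E < +oo)%E.

Definition root_seq (R : realType) (n : nat) (N : nat -> R) : nat -> R :=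
  fun j => N (n * j)%N `^ (n%:R^-1).

Definition SV_rel (R : realType) (M' M : nat -> R) : Prop :=
  exists s : nat, (1 <= s)%N /\ exists C : R, forall j : nat, (1 <= j)%N ->
    (((j%:R^-1 * \big[Num.max/0]_(i < j)
        ((M' j / (s%:R ^+ j * M i)) `^ ((j - i)%:R^-1)))%:E)
      * \sum_(j <= k <oo) ((quot M k)^-1)%:E <= C%:E)%E.

(* Main.v *)
Require Import Defs.
From mathcomp Require Import all_boot all_order all_algebra.
From mathcomp Require Import all_classical all_reals all_analysis.
From mathcomp Require Import lra zify ring.
Import Order.TTheory GRing.Theory Num.Theory.
Local Open Scope ring_scope.


Lemma powRpos (R : realType) (a x : R) : 0 < a -> a `^ x = expR (x * ln a).
Proof. by move=> a0; rewrite /powR gt_eqF. Qed.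

Lemma lnDiv' (R : realType) (x y : R) : 0 < x -> 0 < y -> ln (x / y) = ln x - ln y.
Proof. by move=> x0 y0; rewrite ln_div ?posrE. Qed.
Lemma lnM' (R : realType) (x y : R) : 0 < x -> 0 < y -> ln (x * y) = ln x + ln y.
Proof. by move=> x0 y0; rewrite lnM ?posrE. Qed.

Lemma keyQ (R : realType) (a b c s : R) (n i j : nat) :
  0 < a -> 0 < b -> 0 < c -> 1 <= s -> (0 < n)%N -> (i < j)%N ->
  c ^+ 4 <= b ->
  (a `^ (n%:R^-1) / (s ^+ j * b `^ ((4 * n)%:R^-1))) `^ ((j - i)%:R^-1)
  <= (a / (s ^+ (n * j) * c)) `^ ((n * j - n * i)%:R^-1).
Proof.
move=> a0 b0 c0 s1 n0 ij cb.
have s0 : 0 < s by apply: lt_le_trans s1.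
rewrite !powRpos //; last first.
- apply: divr_gt0; [exact: expR_gt0|]; apply: mulr_gt0; [exact: exprn_gt0|exact: expR_gt0].
- apply: divr_gt0 => //; apply: mulr_gt0 => //; exact: exprn_gt0.
rewrite ler_expR.
have sj : forall k, 0 < s ^+ k by move=> k; exact: exprn_gt0.
rewrite lnDiv' ?expR_gt0 //; last by apply: mulr_gt0; [exact: sj|exact: expR_gt0].
rewrite lnDiv' //; last by apply: mulr_gt0; [exact: sj|].
rewrite !lnM' ?expR_gt0 ?sj //.
rewrite !expRK !lnXn //.
have hb : ln (c ^+ 4) <= ln b by rewrite ler_ln ?posrE ?exprn_gt0.
rewrite lnXn // in hb.
rewrite -mulnBr !natrM.
rewrite -[ln s *+ j]mulr_natr -[ln s *+ (n * j)]mulr_natr natrM.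
move: hb; rewrite -[ln c *+ 4]mulr_natr.
move: (ln a) (ln b) (ln c) (ln s) => la lb lc ls hb.
have N0 : 0 < n%:R :> R by rewrite ltr0n.
have D0 : 0 < (j - i)%:R :> R by rewrite ltr0n subn_gt0.
move: N0 D0; move: (n%:R) ((j - i)%:R) (j%:R) => N D J N0 D0.
rewrite -subr_ge0.
have -> : (N * D)^-1 * (la - (ls * (N * J) + lc)) -
  D^-1 * (N^-1 * la - (ls * J + (4 * N)^-1 * lb)) =
  (lb - lc * 4) / (4 * N * D).
  by field; rewrite !gt_eqF.
by rewrite divr_ge0 ?subr_ge0 // !mulr_ge0 // ltW.
Qed.


Section W.
Variable R : realType.
Variable M : nat -> R.
Hypothesis M0 : M 0%N = 1.
Hypothesis Mpos : forall k, 0 < M k.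
Hypothesis mono : forall k, quot M k <= quot M k.+1.

Lemma quotS k : M k.+1 = M k * quot M k.+1.
Proof. by rewrite /= mulrC divfK // gt_eqF. Qed.

Lemma quot_mono a b : (a <= b)%N -> quot M a <= quot M b.
Proof.
elim: b => [|b IH]; first by rewrite leqn0 => /eqP ->.
rewrite leq_eqVlt => /orP[/eqP -> //|]; rewrite ltnS => /IH H.
exact: le_trans H (mono b).
Qed.

Lemma quot_ge1 k : 1 <= quot M k.
Proof. by have := @quot_mono 0 k (leq0n k). Qed.

Lemma quot_gt0 k : 0 < quot M k.
Proof. exact: lt_le_trans ltr01 (quot_ge1 k). Qed.

Lemma Mgrow p q : M p * quot M p.+1 ^+ q <= M (p + q).
Proof.
elim: q => [|q IH]; first by rewrite expr0 mulr1 addn0.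
rewrite addnS quotS exprSr mulrA.
apply: ler_pM => //.
- by rewrite mulr_ge0 // ?exprn_ge0 // ltW // ?quot_gt0.
- exact: ltW (quot_gt0 _).
- by apply: quot_mono; rewrite ltnS leq_addr.
Qed.

Lemma Mle p : M p <= quot M p ^+ p.
Proof.
elim: p => [|p IH]; first by rewrite M0 expr0.
rewrite quotS exprSr; apply: ler_pM => //; try exact: ltW; try exact: ltW (quot_gt0 _).
apply: le_trans IH _; apply: lerXn2r; rewrite ?nnegrE; [exact: ltW (quot_gt0 _)|exact: ltW (quot_gt0 _)|].
exact: mono.
Qed.

Lemma M2 p : M p ^+ 2 <= M (p + p).
Proof.
apply: le_trans (Mgrow p p); rewrite expr2; apply: ler_pM => //; try exact: ltW.
apply: le_trans (Mle p) _; apply: lerXn2r; rewrite ?nnegrE; [exact: ltW (quot_gt0 _)|exact: ltW (quot_gt0 _)|].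
exact: mono.
Qed.

Lemma M4 p : M p ^+ 4 <= M (4 * p).
Proof.
have -> : (4 * p = (p + p) + (p + p))%N by lia.
apply: le_trans (M2 _); rewrite (_ : 4 = 2 * 2)%N // exprM.
apply: lerXn2r; rewrite ?nnegrE ?exprn_ge0 //; [exact: ltW|exact: ltW|exact: M2].
Qed.

Lemma M_ge1 p : 1 <= M p.
Proof.
have := Mgrow 0 p; rewrite M0 mul1r add0n; apply: le_trans.
by rewrite exprn_ege1 // quot_ge1.
Qed.

Lemma rq_ge m k : (0 < m)%N -> quot M (m * k).+1 <= quot (root_seq m M) k.+1.
Proof.
move=> m0; rewrite /= /root_seq !powRpos // -expRB.
have q0 := quot_gt0 (m * k).+1.
rewrite -[X in X <= _](lnK q0) ler_expR.
have := Mgrow (m * k) m.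
have e : (m * k + m = m * k.+1)%N by rewrite mulnS addnC.
rewrite e => H.
have : ln (M (m * k) * quot M (m * k).+1 ^+ m) <= ln (M (m * k.+1)).
  by rewrite ler_ln ?posrE // mulr_gt0 // exprn_gt0.
rewrite lnM' // ?exprn_gt0 // lnXn // -[ln (quot M (m * k).+1) *+ m]mulr_natr.
have mR : 0 < m%:R :> R by rewrite ltr0n.
move: mR; move: (m%:R) (ln (M (m * k))) (ln (M (m * k.+1))) (ln (quot M (m * k).+1)) => x B A lq x0 h.
rewrite -mulrBr ler_pdivlMl ?mul1r // mulrC; lra.
Qed.

Lemma rq_ge1 m k : (0 < m)%N -> 1 <= quot (root_seq m M) k.
Proof.
move=> m0; case: k => [//|k].
exact: le_trans (quot_ge1 _) (@rq_ge m k m0).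
Qed.

Lemma g_le n k l : (0 < n)%N -> (2 <= k)%N -> (l <= 4 * n * k.-1 + 1)%N ->
  (quot (root_seq (4 * n) M) k)^-1 <= (quot M l)^-1.
Proof.
move=> n0 k2 hl.
have ql := quot_gt0 l.
have m0 : (0 < 4 * n)%N by rewrite muln_gt0 n0.
have qr : 0 < quot (root_seq (4 * n) M) k := lt_le_trans ltr01 (@rq_ge1 (4 * n) k m0).
rewrite lef_pV2 ?posrE //.
case: k k2 hl qr => [//|k] _ hl _.
apply: le_trans (@rq_ge (4 * n) k m0).
apply: quot_mono => //; rewrite /= in hl; lia.
Qed.

Lemma psum n j K : (0 < n)%N -> (1 <= j)%N ->
  \sum_(j <= k < K) (quot (root_seq (4 * n) M) k)^-1 <=
  (j == 1)%:R + n%:R^-1 * \sum_(n * j <= l < n * K) (quot M l)^-1.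
Proof.
move=> n0 j1.
have fge0 : forall a b, 0 <= \sum_(a <= l < b) (quot M l)^-1.
  by move=> a b; apply: sumr_ge0 => l _; rewrite invr_ge0 ltW // quot_gt0.
have rhs0 : forall a b, 0 <= (j == 1)%:R + n%:R^-1 * \sum_(a <= l < b) (quot M l)^-1.
  by move=> a b; apply: addr_ge0; [exact: ler0n| apply: mulr_ge0; [rewrite invr_ge0 ler0n|exact: fge0]].
elim: K => [|K IH]; first by rewrite big_geq.
case: (leqP K.+1 j) => hK; first by rewrite big_geq.
have jK : (j <= K)%N by [].
rewrite big_nat_recr //= mulnS addnC (@big_cat_nat _ _ _ (n * K) (n * j) (n * K + n)) /=; first last.
- by rewrite leq_addr.
- by rewrite leq_mul2l jK orbT.
case: (ltnP K 2) => K2.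
  have K1 : K = 1%N by lia.
  have j1' : j = 1%N by lia.
  subst K j; rewrite big_geq // add0r eqxx.
  apply: le_trans (_ : 1 <= _).
    by rewrite invf_le1 ?rq_ge1 ?muln_gt0 // (lt_le_trans ltr01) // rq_ge1 // muln_gt0.
  rewrite lerDl mulr_ge0 // ?invr_ge0 ?ler0n //.
  by apply: addr_ge0; exact: fge0.
rewrite mulrDr addrA; apply: lerD => //.
rewrite ler_pdivlMl ?ltr0n // mulr_natl.
rewrite -[X in _ *+ X](addKn (n * K)) -sumr_const_nat.
apply: ler_sum_nat => l /andP[h1 h2]; apply: g_le => //.
case: K K2 h1 h2 {IH hK jK} => [|[|K]] // _ h1 h2 /=; nia.
Qed.
End W.


Theorem lemma5p2 (R : realType) (M M' : nat -> R) :
  non_quasianalytic M ->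
  (forall k, 0 < M' k) ->
  SV_rel M' M ->
  forall n : nat, (1 <= n)%N -> SV_rel (root_seq n M') (root_seq (4 * n) M).
Proof.
move=> [[M0 [Mpos [mono _]]] _] M'pos [s [s1 [C hC]]] n n1.
exists s; split => //.
pose T' (j : nat) := (j%:R^-1 * \big[Num.max/0%R]_(i < j)
        ((root_seq n M' j / (s%:R ^+ j * root_seq (4 * n) M i)) `^ ((j - i)%:R^-1)))%R.
pose T (j : nat) := (j%:R^-1 * \big[Num.max/0%R]_(i < j)
        ((M' j / (s%:R ^+ j * M i)) `^ ((j - i)%:R^-1)))%R.
have T'ge0 : forall j, (0 <= T' j)%R.
  move=> j; rewrite /T' mulr_ge0 ?invr_ge0 ?ler0n //; exact: bigmax_ge_id.
have s1R : (1 <= s%:R :> R)%R by rewrite ler1n.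
have qpos := @quot_gt0 R M mono.
exists (T' 1%N + C)%R => j j1.
have jn1 : (1 <= n * j)%N by rewrite muln_gt0 n1.
have hA : (T' j * n%:R^-1 <= T (n * j))%R.
  rewrite /T' /T natrM invfM -mulrA mulrC [X in _ <= X]mulrC -!mulrA.
  apply: ler_wpM2r; first by rewrite mulr_ge0 ?invr_ge0 ?ler0n.
  apply: bigmax_le; first exact: bigmax_ge_id.
  move=> i _.
  have ni : (n * i < n * j)%N by rewrite ltn_pmul2l.
  apply: le_trans (le_bigmax _ _ (Ordinal ni)) => /=.
  rewrite /root_seq.
  apply: keyQ => //; rewrite -mulnA; exact: M4.
have hB : (\sum_(j <= k <oo) ((quot (root_seq (4 * n) M) k)^-1)%:E <=
    ((j == 1%N)%:R)%:E + (n%:R^-1)%:E * \sum_(n * j <= k <oo) ((quot M k)^-1)%:E)%E.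
  apply: lime_le.
    apply: is_cvg_ereal_nneg_natsum => k _.
    by rewrite lee_fin invr_ge0 ltW // (lt_le_trans ltr01) // (@rq_ge1 R M Mpos mono) // muln_gt0.
  apply: nearW => K /=.
  rewrite sumEFin.
  apply: le_trans (_ : (((j == 1%N)%:R + n%:R^-1 * \sum_(n * j <= l < n * K) (quot M l)^-1)%R)%:E <= _)%E.
    by rewrite lee_fin; exact: (@psum R M Mpos mono).
  rewrite EFinD EFinM; apply: leeD2l; apply: lee_wpmul2l; first by rewrite lee_fin invr_ge0 ler0n.
  rewrite -sumEFin; apply: nneseries_lim_ge => l _ _.
  by rewrite lee_fin invr_ge0 ltW.
have S0 : (0 <= \sum_(n * j <= k <oo) ((quot M k)^-1)%:E)%E.
  apply: nneseries_ge0 => l _ _; by rewrite lee_fin invr_ge0 ltW.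
have T'E : (0 <= (T' j)%:E)%E by rewrite lee_fin.
apply: le_trans (lee_wpmul2l T'E hB) _.
rewrite ge0_muleDr ?lee_fin ?ler0n //; last first.
  by apply: mule_ge0 => //; rewrite lee_fin invr_ge0 ler0n.
rewrite muleA -!EFinM EFinD; apply: leeD.
  rewrite lee_fin; have [->|_] := eqVneq j 1%N; first by rewrite mulr1.
  by rewrite mulr0.
apply: le_trans (hC (n * j)%N jn1).
by apply: lee_wpmul2r => //; rewrite lee_fin.
Qed.
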